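(* Let $\epsilon\in(0,\frac12)$, $S\in\mathbb{R}^{m\times n}$, and $A\in\mathbb{R}^{n\times d}$ of full column rank, and let $SA=QR$ be a QR-decomposition of $SA$ (with $Q$ having orthonormal columns and $R\in\mathbb{R}^{d\times d}$ invertible). If $\|(AR^{-1})^\top AR^{-1}-I\|_{\mathrm{op}}\le\epsilon$, then $S$ is a $(1\pm\epsilon)$-subspace embedding of $\mathrm{col}(A)$, i.e., $(1-\epsilon)\|Ax\|_2\le\|SAx\|_2\le(1+\epsilon)\|Ax\|_2$ for all $x\in\mathbb{R}^d$.
   Context: $\|\cdot\|_{\mathrm{op}}$ is the spectral (operator) norm; $\mathrm{col}(A)$ is the column space of $A$. *)

(* Defs.v *)
From HB Require Import structures.
From mathcomp Require Import all_boot all_order all_algebra.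
From mathcomp Require Import all_classical all_reals.
Set Implicit Arguments. Unset Strict Implicit. Unset Printing Implicit Defensive.
Import Order.TTheory GRing.Theory Num.Theory.
Local Open Scope ring_scope.
Local Open Scope classical_set_scope.

Definition vnorm (R : realType) (k : nat) (v : 'cV[R]_k) : R :=
  Num.sqrt (\sum_(i < k) v i 0 ^+ 2).

Definition opnorm (R : realType) (p q : nat) (M : 'M[R]_(p, q)) : R :=
  sup [set vnorm (M *m x) | x in [set x : 'cV[R]_q | vnorm x <= 1]].

(* Main.v *)
Require Import Defs.
From HB Require Import structures.
From mathcomp Require Import all_boot all_order all_algebra.
From mathcomp Require Import all_classical all_reals.
From mathcomp Require Import ring lra.
Import Order.TTheory GRing.Theory Num.Theory.
Local Open Scope ring_scope.
Set Implicit Arguments. Unset Strict Implicit.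

Section Aux.
Variable R : realType.

Lemma sumsq_ge0 k (v : 'cV[R]_k) : 0 <= \sum_(i < k) v i 0 ^+ 2.
Proof. by apply: sumr_ge0 => i _; exact: sqr_ge0. Qed.

Lemma vnorm_ge0 k (v : 'cV[R]_k) : 0 <= vnorm v.
Proof. exact: sqrtr_ge0. Qed.

Lemma vnorm_sqr k (v : 'cV[R]_k) : vnorm v ^+ 2 = \sum_(i < k) v i 0 ^+ 2.
Proof. by rewrite /vnorm sqr_sqrtr // sumsq_ge0. Qed.

Lemma sumsq_mx k (v : 'cV[R]_k) : \sum_(i < k) v i 0 ^+ 2 = (v^T *m v) 0 0.
Proof. by rewrite mxE; apply: eq_bigr => i _; rewrite mxE expr2. Qed.

Lemma dot_mx k (a b : 'cV[R]_k) : (a^T *m b) 0 0 = \sum_(i < k) a i 0 * b i 0.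
Proof. by rewrite mxE; apply: eq_bigr => i _; rewrite mxE. Qed.

Lemma vnorm0_entries k (v : 'cV[R]_k) : vnorm v = 0 -> forall i, v i 0 = 0.
Proof.
move=> h i.
have h2 : \sum_(i < k) v i 0 ^+ 2 = 0 by rewrite -vnorm_sqr h expr0n.
have := @psumr_eq0P _ _ xpredT (fun i => v i 0 ^+ 2) (fun i _ => sqr_ge0 (v i 0)) h2 i isT.
by move/eqP; rewrite sqrf_eq0 => /eqP.
Qed.

Lemma vnormZ k (c : R) (v : 'cV[R]_k) : vnorm (c *: v) = `|c| * vnorm v.
Proof.
rewrite /vnorm.
have -> : \sum_(i < k) (c *: v) i 0 ^+ 2 = c ^+ 2 * \sum_(i < k) v i 0 ^+ 2.
  by rewrite mulr_sumr; apply: eq_bigr => i _; rewrite mxE exprMn.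
by rewrite sqrtrM ?sqr_ge0 // sqrtr_sqr.
Qed.

Lemma dot_le k (a b : 'cV[R]_k) :
  \sum_(i < k) a i 0 * b i 0 <= vnorm a * vnorm b.
Proof.
set s := vnorm a; set t := vnorm b.
have s0 := vnorm_ge0 a; have t0 := vnorm_ge0 b.
have [st0|stn0] := eqVneq (s * t) 0.
  rewrite st0; move: st0 => /eqP; rewrite mulf_eq0 => /orP [] /eqP h.
    by rewrite big1 // => i _; rewrite (vnorm0_entries h) mul0r.
  by rewrite big1 // => i _; rewrite (vnorm0_entries h) mulr0.
have stp : 0 < s * t by rewrite lt_def stn0 mulr_ge0.
have key : 2 * (s * t) * \sum_(i < k) a i 0 * b i 0 <= 2 * (s * t) ^+ 2.
  have : \sum_(i < k) (2 * (s * t) * (a i 0 * b i 0))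
        <= \sum_(i < k) (t ^+ 2 * a i 0 ^+ 2 + s ^+ 2 * b i 0 ^+ 2).
    apply: ler_sum => i _.
    have := sqr_ge0 (t * a i 0 - s * b i 0). nra.
  rewrite -mulr_sumr big_split /= -!mulr_sumr -!vnorm_sqr -/s -/t.
  move=> h; apply: (le_trans h); rewrite le_eqVlt; apply/orP; left; apply/eqP; ring.
have : 0 < 2 * (s * t) by nra.
move=> hp; rewrite -(ler_pM2l hp); apply: (le_trans key); rewrite le_eqVlt; apply/orP; left; apply/eqP; ring.
Qed.

Lemma entry_le k (v : 'cV[R]_k) j : `|v j 0| <= vnorm v.
Proof.
rewrite -sqrtr_sqr /vnorm; apply: ler_wsqrtr.
rewrite (bigD1 j) //= lerDl; apply: sumr_ge0 => i _; exact: sqr_ge0.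
Qed.

Lemma opnorm_has_sup p q (M : 'M[R]_(p, q)) :
  has_sup [set vnorm (M *m x) | x in [set x : 'cV[R]_q | vnorm x <= 1]].
Proof.
split.
  exists (vnorm (M *m 0)), 0 => //=.
  by rewrite /vnorm big1 ?sqrtr0 // => i _; rewrite mxE expr0n.
exists (Num.sqrt (\sum_(i < p) (\sum_(j < q) `|M i j|) ^+ 2)).
move=> _ [x /= hx <-]; apply: ler_wsqrtr; apply: ler_sum => i _.
have h1 : `|(M *m x) i 0| <= \sum_(j < q) `|M i j|.
  rewrite mxE; apply: (le_trans (ler_norm_sum _ _ _)); apply: ler_sum => j _.
  rewrite normrM; rewrite -[X in _ <= X]mulr1; apply: ler_wpM2l => //.
  exact: le_trans (entry_le x j) hx.
rewrite -real_normK ?num_real //.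
by apply: lerXn2r => //; rewrite nnegrE // (le_trans _ h1).
Qed.

Lemma opnorm_le p q (M : 'M[R]_(p, q)) y : vnorm (M *m y) <= opnorm M * vnorm y.
Proof.
have [y0|yn0] := eqVneq (vnorm y) 0.
  have -> : y = 0 by apply/matrixP => i j; rewrite (ord1 j) mxE (vnorm0_entries y0).
  have v0 : vnorm (0 : 'cV[R]_p) = 0.
    by rewrite /vnorm big1 ?sqrtr0 // => i _; rewrite mxE expr0n.
  have v0' : vnorm (0 : 'cV[R]_q) = 0.
    by rewrite /vnorm big1 ?sqrtr0 // => i _; rewrite mxE expr0n.
  by rewrite mulmx0 v0 v0' mulr0.
have yp : 0 < vnorm y by rewrite lt_def yn0 vnorm_ge0.
set z := (vnorm y)^-1 *: y.
have hz : vnorm z = 1 by rewrite vnormZ ger0_norm ?invr_ge0 ?vnorm_ge0 // mulVf.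
have hMz : vnorm (M *m z) <= opnorm M.
  apply: (sup_upper_bound (opnorm_has_sup M)); by exists z => //=; rewrite hz.
have : vnorm (M *m y) = vnorm y * vnorm (M *m z).
  rewrite /z -scalemxAr vnormZ ger0_norm ?invr_ge0 ?vnorm_ge0 //.
  by rewrite mulrA mulfV // mul1r.
move=> ->; rewrite mulrC; apply: ler_wpM2r => //; exact: vnorm_ge0.
Qed.

End Aux.

Theorem mainTheorem4 (R : realType) (m n d : nat) (eps : R)
  (S : 'M[R]_(m, n)) (A : 'M[R]_(n, d)) (Q : 'M[R]_(m, d)) (Rm : 'M[R]_d) :
  0 < eps -> eps < 1 / 2 ->
  \rank A = d ->
  Q^T *m Q = 1%:M ->
  Rm \in unitmx ->
  S *m A = Q *m Rm ->
  opnorm ((A *m invmx Rm)^T *m (A *m invmx Rm) - 1%:M) <= eps ->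
  forall x : 'cV[R]_d,
    (1 - eps) * vnorm (A *m x) <= vnorm (S *m A *m x) /\
    vnorm (S *m A *m x) <= (1 + eps) * vnorm (A *m x).
Proof.
move=> e0 e1 _ hQ hR hSA hop x.
set U := A *m invmx Rm.
set M := U^T *m U - 1%:M.
set y := Rm *m x.
have hb : vnorm (S *m A *m x) = vnorm y.
  rewrite hSA -mulmxA -/y /vnorm sumsq_mx trmx_mul mulmxA -(mulmxA y^T) hQ mulmx1.
  by rewrite sumsq_mx.
have ha : A *m x = U *m y by rewrite /U /y mulmxA -(mulmxA A) mulVmx // mulmx1.
have hsq : vnorm (A *m x) ^+ 2 = vnorm y ^+ 2 + (y^T *m (M *m y)) 0 0.
  rewrite ha !vnorm_sqr !sumsq_mx /M; clearbody U y.
  rewrite mulmxBl mulmxBr mul1mx trmx_mul !mulmxA.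
  set X := y^T *m U^T *m U *m y; set Y := y^T *m y.
  by rewrite [(X - Y) 0 0]mxE [(- Y) 0 0]mxE; ring.
have hd1 := dot_le y (M *m y).
have hd2 := dot_le y (- (M *m y)).
have hMy := opnorm_le M y.
rewrite dot_mx in hsq.
have hn : vnorm (- (M *m y)) = vnorm (M *m y).
  by rewrite -scaleN1r vnormZ normrN normr1 mul1r.
rewrite hn in hd2.
have hneg : \sum_(i < d) y i 0 * (- (M *m y)) i 0 = - \sum_(i < d) y i 0 * (M *m y) i 0.
  by rewrite -sumrN; apply: eq_bigr => i _; rewrite [(- (M *m y)) i 0]mxE mulrN.
rewrite hneg in hd2.
rewrite hb.
set a := vnorm (A *m x) in hsq *.
set b := vnorm y in hsq hd1 hd2 hMy *.
set c := vnorm (M *m y) in hd1 hd2 hMy.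
set s := \sum_(i < d) _ in hsq hd1 hd2.
have a0 : 0 <= a := vnorm_ge0 _.
have b0 : 0 <= b := vnorm_ge0 _.
have c0 : 0 <= c := vnorm_ge0 _.
have hc : c <= eps * b by apply: (le_trans hMy); apply: ler_wpM2r.
have hs1 : s <= eps * b ^+ 2 by nra.
have hs2 : - s <= eps * b ^+ 2 by nra.
have ha2 : a ^+ 2 <= (1 + eps) * b ^+ 2 by nra.
have hb2 : (1 - eps) * b ^+ 2 <= a ^+ 2 by nra.
have e2 : 0 <= 1 - eps by nra.
have k1 : ((1 - eps) * a) ^+ 2 <= b ^+ 2.
  have : (1 - eps) ^+ 2 * (1 + eps) <= 1 by nra.
  have : ((1 - eps) * a) ^+ 2 <= (1 - eps) ^+ 2 * ((1 + eps) * b ^+ 2).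
    by rewrite exprMn; apply: ler_wpM2l => //; exact: sqr_ge0.
  have := sqr_ge0 b. nra.
have k2 : b ^+ 2 <= ((1 + eps) * a) ^+ 2.
  have : 1 <= (1 - eps) * (1 + eps) ^+ 2 by nra.
  have : (1 + eps) ^+ 2 * ((1 - eps) * b ^+ 2) <= ((1 + eps) * a) ^+ 2.
    by rewrite exprMn; apply: ler_wpM2l => //; exact: sqr_ge0.
  have := sqr_ge0 b. nra.
have p1 : 0 <= (1 - eps) * a by nra.
have p2 : 0 <= (1 + eps) * a by nra.
split.
  by rewrite -(@ler_pXn2r _ 2) // nnegrE.
by rewrite -(@ler_pXn2r _ 2) // nnegrE.
Qed.
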